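(* Let $(\rho_0,p_0)$ solve the TOV system on $[0,R)$ with regular centre and mass function $m_0$, let $g_0(r)=\frac{m_0+4\pi p_0r^3}{r^2[1-2m_0/r]}$, and assume $1+r g_0(r)>0$ on $[0,R)$. For a real parameter $\delta\rho_c$ define $$\delta m(r)=\frac{4\pi r^3\,\delta\rho_c}{3\,[1+r g_0(r)]^2}\exp\Bigl\{2\int_0^r g_0(s)\,\frac{1-s g_0(s)}{1+s g_0(s)}\,ds\Bigr\},\qquad \delta p(r)=-\frac{\delta m(r)}{4\pi r^3}\,\frac{1+8\pi p_0(r)r^2}{1-2m_0(r)/r}.$$ Set $m=m_0+\delta m$, $\rho=m'/(4\pi r^2)$, $p=p_0+\delta p$. Then on every interval $[0,R')\subseteq[0,R)$ on which $1-2m(r)/r>0$, the pair $(\rho,p)$ solves the TOV system with regular centre, has mass function $m$, satisfies $$\frac{m+4\pi p r^3}{r^2[1-2m/r]}=g_0(r),$$ and has central density $\rho_0(0)+\delta\rho_c$ and central pressure $p_0(0)+\delta p_c$ with $\delta p_c=-\delta\rho_c/3$. Explicitly $$\delta p(r)=\frac{\delta p_c}{[1+rg_0]^2}\,\frac{1+8\pi p_0r^2}{1-2m_0/r}\exp\Bigl\{2\int_0^r g_0\frac{1-sg_0}{1+sg_0}ds\Bigr\}.$$ Conversely, every solution of the TOV system with regular centre whose function $\frac{m+4\pi pr^3}{r^2[1-2m/r]}$ equals $g_0$ is of this form. *)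

(* Defs.v *)
From Stdlib Require Import Reals.
From Coquelicot Require Import Coquelicot.
Open Scope R_scope.

Definition mass (rho : R -> R) (r : R) : R :=
  4 * PI * RInt (fun s => s ^ 2 * rho s) 0 r.

Definition gfun (m p : R -> R) (r : R) : R :=
  (m r + 4 * PI * p r * r ^ 3) / (r ^ 2 * (1 - 2 * m r / r)).

(* (rho, p) solves the TOV system on [0, Rs) with regular centre, with
   central density rhoc and central pressure pc (taken as right limits at 0):
   rho, p are defined on (0, Rs), rho continuous there, p differentiable
   with p' = -(rho + p) g, 1 - 2m/r > 0, and rho, p have the finite
   limits rhoc, pc at the centre. *)
Definition TOV_regular (Rs : R) (rho p : R -> R) (rhoc pc : R) : Prop :=
  (forall r, 0 < r < Rs -> continuous rho r) /\
  filterlim rho (at_right 0) (locally rhoc) /\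
  filterlim p (at_right 0) (locally pc) /\
  (forall r, 0 < r < Rs -> 1 - 2 * mass rho r / r > 0) /\
  (forall r, 0 < r < Rs ->
     is_derive p r (- (rho r + p r) * gfun (mass rho) p r)).

Definition expfac (g : R -> R) (r : R) : R :=
  exp (2 * RInt (fun s => g s * (1 - s * g s) / (1 + s * g s)) 0 r).

Definition dmass (m0 p0 : R -> R) (drc : R) (r : R) : R :=
  4 * PI * r ^ 3 * drc / (3 * (1 + r * gfun m0 p0 r) ^ 2)
  * expfac (gfun m0 p0) r.

Definition dpres (m0 p0 : R -> R) (drc : R) (r : R) : R :=
  - dmass m0 p0 drc r / (4 * PI * r ^ 3)
  * ((1 + 8 * PI * p0 r * r ^ 2) / (1 - 2 * m0 r / r)).

Definition mpert (m0 p0 : R -> R) (drc : R) (r : R) : R :=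
  m0 r + dmass m0 p0 drc r.
Definition rhopert (m0 p0 : R -> R) (drc : R) (r : R) : R :=
  Derive (mpert m0 p0 drc) r / (4 * PI * r ^ 2).
Definition ppert (m0 p0 : R -> R) (drc : R) (r : R) : R :=
  p0 r + dpres m0 p0 drc r.

(* Main.v *)
Require Import Defs.
From Stdlib Require Import Reals Lra.
From Coquelicot Require Import Coquelicot.
Open Scope R_scope.

Definition lim0 (f : R -> R) (l : R) := filterlim f (at_right 0) (locally l).

Lemma lim0_const c : lim0 (fun _ => c) c.
Proof. apply filterlim_const. Qed.

Lemma lim0_id : lim0 (fun x => x) 0.
Proof.
  intros P HP. unfold filtermap, at_right, within.
  apply (filter_imp P). intros x H _; exact H. exact HP.
Qed.

Lemma lim0_plus f g a b : lim0 f a -> lim0 g b -> lim0 (fun x => f x + g x) (a + b).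
Proof.
  intros Hf Hg. apply (filterlim_comp_2 f g Rplus Hf Hg).
  apply (filterlim_plus a b).
Qed.

Lemma lim0_mult f g a b : lim0 f a -> lim0 g b -> lim0 (fun x => f x * g x) (a * b).
Proof.
  intros Hf Hg. apply (filterlim_comp_2 f g Rmult Hf Hg).
  apply (filterlim_mult a b).
Qed.

Lemma lim0_opp f a : lim0 f a -> lim0 (fun x => - f x) (- a).
Proof.
  intros Hf. apply (filterlim_comp _ _ _ f Ropp _ _ _ Hf).
  apply (filterlim_opp a).
Qed.

Lemma lim0_comp f k a : lim0 f a -> continuous k a -> lim0 (fun x => k (f x)) (k a).
Proof.
  intros Hf Hk. apply (filterlim_comp _ _ _ f k _ _ _ Hf). exact Hk.
Qed.

Lemma lim0_inv f a : lim0 f a -> a <> 0 -> lim0 (fun x => / f x) (/ a).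
Proof.
  intros Hf Ha. apply (lim0_comp f (fun y => / y) a Hf).
  apply continuous_Rinv; exact Ha.
Qed.

Lemma lim0_minus f g a b : lim0 f a -> lim0 g b -> lim0 (fun x => f x - g x) (a - b).
Proof. intros; apply lim0_plus; auto; apply lim0_opp; auto. Qed.

Lemma lim0_div f g a b : lim0 f a -> lim0 g b -> b <> 0 -> lim0 (fun x => f x / g x) (a / b).
Proof. intros; apply lim0_mult; auto; apply lim0_inv; auto. Qed.

Lemma lim0_pow f a n : lim0 f a -> lim0 (fun x => f x ^ n) (a ^ n).
Proof.
  intros Hf; induction n; simpl. apply lim0_const. apply lim0_mult; auto.
Qed.

Lemma lim0_ext f g l d : 0 < d -> (forall x, 0 < x < d -> f x = g x) -> lim0 f l -> lim0 g l.
Proof.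
  intros Hd H Hf. apply (filterlim_ext_loc f g); [|exact Hf].
  exists (mkposreal d Hd). intros y Hy Hy0. apply H. split; auto.
  unfold ball in Hy; simpl in Hy; unfold AbsRing_ball, abs, minus, plus, opp in Hy; simpl in Hy.
  apply Rabs_def2 in Hy. lra.
Qed.

Lemma lim0_ext_eq f g l : lim0 f l -> (forall x, g x = f x) -> lim0 g l.
Proof. intros H E. apply (lim0_ext f g l 1); [lra| intros; auto |auto]. Qed.

Lemma lim0_eq f l l' : lim0 f l -> l = l' -> lim0 f l'.
Proof. intros H ->; auto. Qed.

Lemma lim0_unique f l l' : lim0 f l -> lim0 f l' -> l = l'.
Proof.
  intros H H'. apply (filterlim_locally_unique f l l' H H').
Qed.

Lemma lim0_squeeze f C d : 0 < d -> (forall x, 0 < x < d -> Rabs (f x) <= C * x) -> lim0 f 0.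
Proof.
  intros Hd H. apply filterlim_locally. intros eps.
  assert (HC : 0 < Rabs C + 1) by (pose proof (Rabs_pos C); lra).
  assert (He : 0 < Rmin d (eps / (Rabs C + 1))).
  { apply Rmin_pos; auto. apply Rdiv_lt_0_compat; auto. apply cond_pos. }
  exists (mkposreal _ He). intros y Hy Hy0.
  unfold ball in Hy; simpl in Hy; unfold AbsRing_ball, abs, minus, plus, opp in Hy; simpl in Hy.
  rewrite Ropp_0, Rplus_0_r in Hy. rewrite Rabs_right in Hy by lra.
  assert (Hy1 : y < d) by (pose proof (Rmin_l d (eps / (Rabs C + 1))); lra).
  assert (Hy2 : y < eps / (Rabs C + 1)) by (pose proof (Rmin_r d (eps / (Rabs C + 1))); lra).
  unfold ball; simpl; unfold AbsRing_ball, abs, minus, plus, opp; simpl.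
  rewrite Ropp_0, Rplus_0_r.
  eapply Rle_lt_trans. apply H; lra.
  apply Rle_lt_trans with ((Rabs C + 1) * y).
  apply Rmult_le_compat_r. lra. pose proof (Rle_abs C); lra.
  apply Rmult_lt_reg_l with (/ (Rabs C + 1)). apply Rinv_0_lt_compat; lra.
  rewrite <- Rmult_assoc, Rinv_l by lra. lra.
Qed.

Lemma lim0_bounded f l : lim0 f l -> exists d, 0 < d /\ forall x, 0 < x < d -> Rabs (f x) <= Rabs l + 1.
Proof.
  intros H. apply filterlim_locally with (eps := mkposreal 1 Rlt_0_1) in H.
  destruct H as [e He]. exists e. split. apply cond_pos.
  intros x Hx. assert (Hb : ball l 1 (f x)).
  { apply He. unfold ball; simpl; unfold AbsRing_ball, abs, minus, plus, opp; simpl.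
    rewrite Ropp_0, Rplus_0_r, Rabs_right; lra. lra. }
  unfold ball in Hb; simpl in Hb; unfold AbsRing_ball, abs, minus, plus, opp in Hb; simpl in Hb.
  pose proof (Rabs_triang_inv (f x) l). unfold Rminus in H. lra.
Qed.

Lemma ball_R (x e y : R) : ball x e y <-> Rabs (y - x) < e.
Proof. unfold ball; simpl; unfold AbsRing_ball, abs, minus, plus, opp; simpl. tauto. Qed.

Lemma loc_interval a b x : a < x < b -> locally x (fun y => a < y < b).
Proof.
  intros H. assert (He : 0 < Rmin (x - a) (b - x)) by (apply Rmin_pos; lra).
  exists (mkposreal _ He). intros y Hy. apply ball_R in Hy. simpl in Hy.
  apply Rabs_def2 in Hy. pose proof (Rmin_l (x-a) (b-x)). pose proof (Rmin_r (x-a) (b-x)). unfold minus, plus, opp in Hy; simpl in Hy. lra.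
Qed.

Definition fext (f : R -> R) (L : R) (s : R) : R := if Rle_dec s 0 then L else f s.

Lemma fe_cont f L Rs : (forall r, 0 < r < Rs -> continuous f r) -> lim0 f L ->
  forall x, x < Rs -> continuous (fext f L) x.
Proof.
  intros Hc Hl x Hx.
  destruct (Rtotal_order x 0) as [Hneg|[H0|Hpos]].
  - apply continuous_ext_loc with (g := fun _ => L); [|apply continuous_const].
    apply filter_imp with (P := fun y => x - 1 < y < 0); [|apply loc_interval; lra].
    intros y Hy. unfold fext. destruct (Rle_dec y 0); auto; lra.
  - subst x. intros P HP. unfold filtermap.
    assert (E0 : fext f L 0 = L) by (unfold fext; destruct (Rle_dec 0 0); auto; lra).
    rewrite E0 in HP.
    assert (HPL : P L) by (apply locally_singleton; exact HP).
    specialize (Hl P HP). destruct Hl as [d Hd].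
    exists d. intros y Hy. unfold fext. destruct (Rle_dec y 0) as [Hy0|Hy0]; auto.
    apply Hd; auto. lra.
  - apply continuous_ext_loc with (g := f); [|apply Hc; lra].
    apply filter_imp with (P := fun y => 0 < y < Rs); [|apply loc_interval; lra].
    intros y Hy. unfold fext. destruct (Rle_dec y 0); auto; lra.
Qed.

Section Prim.
Variables (f : R -> R) (L Rs : R).
Hypothesis Hc : forall r, 0 < r < Rs -> continuous f r.
Hypothesis Hl : lim0 f L.
Hypothesis HRs : 0 < Rs.

Lemma prim_ex r : 0 <= r < Rs -> ex_RInt f 0 r /\ RInt f 0 r = RInt (fext f L) 0 r.
Proof.
  intros Hr.
  assert (He : ex_RInt (fext f L) 0 r).
  { apply (ex_RInt_continuous (V := R_CompleteNormedModule)). intros z Hz. apply (fe_cont f L Rs Hc Hl).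
    rewrite Rmax_right in Hz by lra. lra. }
  split.
  - apply ex_RInt_ext with (fext f L); auto.
    intros x Hx. rewrite Rmin_left in Hx by lra. unfold fext. destruct (Rle_dec x 0); auto; lra.
  - apply RInt_ext. intros x Hx. rewrite Rmin_left in Hx by lra. unfold fext.
    destruct (Rle_dec x 0); auto; lra.
Qed.

Lemma prim_deriv r : 0 < r < Rs -> is_derive (fun x => RInt f 0 x) r (f r).
Proof.
  intros Hr. apply (is_derive_RInt f (fun x => RInt f 0 x) 0 r); [|apply Hc; auto].
  apply filter_imp with (P := fun y => 0 < y < Rs); [|apply loc_interval; lra].
  intros y Hy. apply (RInt_correct (V := R_CompleteNormedModule)). apply (prim_ex y); lra.
Qed.

Lemma prim_lim0 : lim0 (fun x => RInt f 0 x) 0.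
Proof.
  assert (Hc0 : continuous (fun x => RInt (fext f L) 0 x) 0).
  { apply (ex_derive_continuous (K := R_AbsRing) (V := R_NormedModule)). eexists. apply (is_derive_RInt (fext f L) (fun x => RInt (fext f L) 0 x) 0 0).
    apply filter_imp with (P := fun y => -1 < y < Rs); [|apply loc_interval; lra].
    intros y Hy. apply (RInt_correct (V := R_CompleteNormedModule)). apply (ex_RInt_continuous (V := R_CompleteNormedModule)). intros z Hz.
    apply (fe_cont f L Rs Hc Hl). assert (Rmax 0 y < Rs) by (apply Rmax_lub_lt; lra). lra.
    apply (fe_cont f L Rs Hc Hl). lra. }
  assert (Hlim : lim0 (fun x => RInt (fext f L) 0 x) 0).
  { apply (lim0_eq _ (RInt (fext f L) 0 0)); [|apply (RInt_point (V := R_CompleteNormedModule))].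
    intros P HP. specialize (Hc0 P HP). destruct Hc0 as [d Hd]. exists d. intros y Hy _. apply Hd; auto. }
  apply (lim0_ext (fun x => RInt (fext f L) 0 x) _ 0 Rs). lra. intros x Hx. symmetry; apply prim_ex; lra. exact Hlim.
Qed.

End Prim.

Lemma cR_plus (f g : R -> R) x : continuous f x -> continuous g x -> continuous (fun y => f y + g y) x.
Proof. intros; apply (continuous_plus f g); auto. Qed.
Lemma cR_mult (f g : R -> R) x : continuous f x -> continuous g x -> continuous (fun y => f y * g y) x.
Proof. intros; apply (continuous_mult f g); auto. Qed.
Lemma cR_opp (f : R -> R) x : continuous f x -> continuous (fun y => - f y) x.
Proof. intros; apply (continuous_opp f); auto. Qed.
Lemma cR_minus (f g : R -> R) x : continuous f x -> continuous g x -> continuous (fun y => f y - g y) x.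
Proof. intros; apply cR_plus; auto; apply cR_opp; auto. Qed.
Lemma cR_inv (f : R -> R) x : continuous f x -> f x <> 0 -> continuous (fun y => / f y) x.
Proof. intros. apply (continuous_comp (U := R_UniformSpace) (V := R_UniformSpace) f (fun y => / y)); auto. apply continuous_Rinv; auto. Qed.
Lemma cR_div (f g : R -> R) x : continuous f x -> continuous g x -> g x <> 0 -> continuous (fun y => f y / g y) x.
Proof. intros; apply cR_mult; auto; apply cR_inv; auto. Qed.
Lemma cR_const (c x : R) : continuous (fun _ : R => c) x.
Proof. apply continuous_const. Qed.
Lemma cR_id x : continuous (fun y : R => y) x.
Proof. apply continuous_id. Qed.
Lemma cR_pow (f : R -> R) n x : continuous f x -> continuous (fun y => f y ^ n) x.
Proof. intros H; induction n; simpl. apply cR_const. apply cR_mult; auto. Qed.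
Lemma cR_exp (f : R -> R) x : continuous f x -> continuous (fun y => exp (f y)) x.
Proof. intros. apply (continuous_comp (U := R_UniformSpace) (V := R_UniformSpace) f exp); auto. apply continuous_exp. Qed.
Lemma cR_der (f : R -> R) x l : is_derive f x l -> continuous f x.
Proof. intros H. apply (ex_derive_continuous (K := R_AbsRing) (V := R_NormedModule)). exists l; exact H. Qed.

Lemma const_on F a b : (forall x, a < x < b -> is_derive F x 0) ->
  forall x y, a < x < b -> a < y < b -> F x = F y.
Proof.
  intros HF x y Hx Hy.
  destruct (MVT_gen F x y (fun _ => 0)) as [c [Hc E]].
  - intros z Hz. apply HF. split.
    + apply Rle_lt_trans with (Rmin x y); [apply Rmin_glb; lra| lra].
    + apply Rlt_le_trans with (Rmax x y); [lra| apply Rmax_lub; lra].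
  - intros z Hz. apply continuity_pt_filterlim. apply (cR_der F z 0). apply HF. split.
    + apply Rlt_le_trans with (Rmin x y); [apply Rmin_glb_lt; lra| lra].
    + apply Rle_lt_trans with (Rmax x y); [lra| apply Rmax_lub_lt; lra].
  - lra.
Qed.

Lemma const_lim F Rs L : 0 < Rs -> (forall x, 0 < x < Rs -> is_derive F x 0) -> lim0 F L ->
  forall x, 0 < x < Rs -> F x = L.
Proof.
  intros HRs HF HL x Hx.
  apply (lim0_unique F); auto.
  apply (lim0_ext (fun _ => F x) F (F x) x). lra.
  intros y Hy. apply (const_on F 0 Rs HF); lra.
  apply lim0_const.
Qed.

Lemma mass_small rho Rs rc : 0 < Rs -> (forall r, 0 < r < Rs -> continuous rho r) -> lim0 rho rc ->
  lim0 (fun r => mass rho r / r ^ 2) 0.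
Proof.
  intros HRs Hc Hl.
  set (f := fun s => s ^ 2 * rho s).
  assert (Hfc : forall r, 0 < r < Rs -> continuous f r).
  { intros r Hr. unfold f. apply cR_mult. apply cR_pow, cR_id. apply Hc; auto. }
  assert (Hfl : lim0 f 0).
  { unfold f. apply (lim0_eq _ (0 ^ 2 * rc)). apply lim0_mult; auto. apply lim0_pow, lim0_id. ring. }
  destruct (lim0_bounded rho rc Hl) as [d [Hd Hb]].
  apply (lim0_squeeze _ (4 * PI * (Rabs rc + 1)) (Rmin d Rs)). apply Rmin_pos; auto.
  intros x Hx. assert (Hxd : x < d) by (pose proof (Rmin_l d Rs); lra).
  assert (HxR : x < Rs) by (pose proof (Rmin_r d Rs); lra).
  unfold mass. destruct (prim_ex f 0 Rs Hfc Hfl x) as [_ E]. lra. fold f. rewrite E.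
  assert (Hbd : Rabs (RInt (fext f 0) 0 x) <= (x - 0) * (x ^ 2 * (Rabs rc + 1))).
  { apply abs_RInt_le_const. lra. apply (prim_ex (fext f 0) 0 Rs).
    intros r Hr. apply (fe_cont f 0 Rs Hfc Hfl). lra.
    apply (lim0_ext f _ 0 Rs). exact HRs. intros y Hy. unfold fext. destruct (Rle_dec y 0); auto; lra. auto. lra.
    intros t Ht. unfold fext. destruct (Rle_dec t 0).
    - rewrite Rabs_R0. apply Rmult_le_pos. apply pow2_ge_0. pose proof (Rabs_pos rc); lra.
    - unfold f. rewrite Rabs_mult. rewrite Rabs_right by (apply Rle_ge, pow2_ge_0).
      apply Rmult_le_compat. apply pow2_ge_0. apply Rabs_pos.
      apply pow_incr; lra. apply Hb; lra. }
  assert (PI > 0) by apply PI_RGT_0.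
  rewrite Rabs_div by (apply pow_nonzero; lra). rewrite Rabs_mult.
  rewrite (Rabs_right (4 * PI)) by lra. rewrite (Rabs_right (x ^ 2)) by (apply Rle_ge, pow2_ge_0).
  apply Rmult_le_reg_r with (x ^ 2). apply pow_lt; lra.
  unfold Rdiv. rewrite Rmult_assoc, Rinv_l by (apply pow_nonzero; lra). rewrite Rmult_1_r.
  replace (4 * PI * (Rabs rc + 1) * x * x ^ 2) with (4 * PI * ((x - 0) * (x ^ 2 * (Rabs rc + 1)))) by ring.
  apply Rmult_le_compat_l. lra. exact Hbd.
Qed.

Ltac subst_der H := match type of H with is_derive ?f ?x ?l =>
  replace (Derive (fun y => f y) x) with l by (symmetry; apply is_derive_unique; exact H) end.

Lemma q_ne r M : 0 < r -> 1 - 2 * M / r <> 0 -> r - 2 * M <> 0.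
Proof.
  intros Hr Hq E. apply Hq. replace (1 - 2 * M / r) with ((r - 2 * M) / r) by (field; lra).
  rewrite E. unfold Rdiv; ring.
Qed.

Lemma der_scal k (f : R -> R) x l : is_derive f x l -> is_derive (fun y => k * f y) x (k * l).
Proof. intros H. apply (is_derive_scal f x k l H). Qed.

Lemma mass_deriv Rs rho rc : 0 < Rs -> (forall r, 0 < r < Rs -> continuous rho r) -> lim0 rho rc ->
  forall r, 0 < r < Rs -> is_derive (mass rho) r (4 * PI * r ^ 2 * rho r).
Proof.
  intros HRs Hc Hl r Hr.
  set (f := fun s => s ^ 2 * rho s).
  assert (Hfc : forall r, 0 < r < Rs -> continuous f r).
  { intros r' Hr'. unfold f. apply cR_mult. apply cR_pow, cR_id. apply Hc; auto. }
  assert (Hfl : lim0 f 0).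
  { unfold f. apply (lim0_eq _ (0 ^ 2 * rc)). apply lim0_mult; auto. apply lim0_pow, lim0_id. ring. }
  unfold mass. rewrite Rmult_assoc. apply der_scal. apply (prim_deriv f 0 Rs Hfc Hfl r Hr).
Qed.

Lemma mass_lim Rs rho rc : 0 < Rs -> (forall r, 0 < r < Rs -> continuous rho r) -> lim0 rho rc ->
  lim0 (mass rho) 0.
Proof.
  intros HRs Hc Hl.
  set (f := fun s => s ^ 2 * rho s).
  assert (Hfc : forall r, 0 < r < Rs -> continuous f r).
  { intros r' Hr'. unfold f. apply cR_mult. apply cR_pow, cR_id. apply Hc; auto. }
  assert (Hfl : lim0 f 0).
  { unfold f. apply (lim0_eq _ (0 ^ 2 * rc)). apply lim0_mult; auto. apply lim0_pow, lim0_id. ring. }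
  unfold mass. apply (lim0_eq _ (4 * PI * 0)). apply lim0_mult. apply lim0_const.
  apply (prim_lim0 f 0 Rs Hfc Hfl HRs). ring.
Qed.

Definition gdf (m p rho : R -> R) (x : R) : R :=
  let g := gfun m p x in
  (4 * PI * x ^ 2 * rho x + 4 * PI * (- (rho x + p x) * g * x ^ 3 + p x * 3 * x ^ 2)
   - g * (2 * x * (1 - 2 * m x / x) - 8 * PI * x ^ 3 * rho x + 2 * m x))
  / (x ^ 2 * (1 - 2 * m x / x)).

Lemma gfun_deriv (m p rho : R -> R) r :
  0 < r -> 1 - 2 * m r / r <> 0 ->
  is_derive m r (4 * PI * r ^ 2 * rho r) ->
  is_derive p r (- (rho r + p r) * gfun m p r) ->
  is_derive (gfun m p) r (gdf m p rho r).
Proof.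
  intros Hr Hq Hm Hp. unfold gfun at 1.
  auto_derive.
  - repeat split; try (eexists; eassumption); try lra.
    apply Rmult_integral_contrapositive_currified; [nra|]. lra.
  - subst_der Hm. subst_der Hp.
    unfold gdf, gfun. field. split; [lra|]. apply q_ne; auto.
Qed.

Definition acoef (G dG r : R) : R := 3 / r - 2 * r * (dG + G ^ 2) / (1 + r * G).

Lemma dm_der (G I : R -> R) r dG drc : 0 < r -> 1 + r * G r <> 0 ->
  is_derive G r dG -> is_derive I r (G r * (1 - r * G r) / (1 + r * G r)) ->
  is_derive (fun x => 4 * PI * x ^ 3 * drc / (3 * (1 + x * G x) ^ 2) * exp (2 * I x)) r
    (acoef (G r) dG r * (4 * PI * r ^ 3 * drc / (3 * (1 + r * G r) ^ 2) * exp (2 * I r))).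
Proof.
  intros Hr Hd HG HI. auto_derive.
  - repeat split; try (eexists; eassumption).
    rewrite Rmult_1_r. apply Rmult_integral_contrapositive_currified; [lra|].
    apply Rmult_integral_contrapositive_currified; auto.
  - subst_der HG. subst_der HI. unfold acoef. field. lra.
Qed.

Lemma dp_der (D G : R -> R) r dD dG : 0 < r ->
  is_derive D r dD -> is_derive G r dG ->
  is_derive (fun x => - D x * (1 + 2 * x * G x) / (4 * PI * x ^ 3)) r
   (- dD * (1 + 2 * r * G r) / (4 * PI * r ^ 3) - D r * 2 * (G r + r * dG) / (4 * PI * r ^ 3)
    + 3 * D r * (1 + 2 * r * G r) / (4 * PI * r ^ 4)).
Proof.
  intros Hr HD HG. assert (PI > 0) by apply PI_RGT_0. auto_derive.
  - repeat split; try (eexists; eassumption). apply Rmult_integral_contrapositive_currified; [lra|]. 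
    apply Rmult_integral_contrapositive_currified; [lra|].
    apply Rmult_integral_contrapositive_currified; lra.
  - subst_der HD. subst_der HG. field. lra.
Qed.

Lemma key_id r G dG D dD : r <> 0 -> 1 + r * G <> 0 ->
  (- dD * (1 + 2 * r * G) / (4 * PI * r ^ 3) - D * 2 * (G + r * dG) / (4 * PI * r ^ 3)
    + 3 * D * (1 + 2 * r * G) / (4 * PI * r ^ 4))
  + (dD / (4 * PI * r ^ 2) - D * (1 + 2 * r * G) / (4 * PI * r ^ 3)) * G
  = - (1 + r * G) / (4 * PI * r ^ 3) * (dD - acoef G dG r * D).
Proof.
  intros Hr Hd. assert (PI > 0) by apply PI_RGT_0. unfold acoef. field. split; auto. lra.
Qed.

Lemma lim0_exp f a : lim0 f a -> lim0 (fun x => exp (f x)) (exp a).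
Proof. intros H. apply (lim0_comp f exp a H). apply continuous_exp. Qed.

Ltac lim_t := first [ match goal with H : lim0 ?f _ |- lim0 ?f _ => exact H end
 | lazymatch goal with
 | |- lim0 (fun x => @?f x + @?g x) _ => eapply (lim0_plus f g); [lim_t|lim_t]
 | |- lim0 (fun x => @?f x - @?g x) _ => eapply (lim0_minus f g); [lim_t|lim_t]
 | |- lim0 (fun x => @?f x * @?g x) _ => eapply (lim0_mult f g); [lim_t|lim_t]
 | |- lim0 (fun x => @?f x / @?g x) _ => eapply (lim0_div f g); [lim_t|lim_t|]
 | |- lim0 (fun x => - @?f x) _ => eapply (lim0_opp f); lim_t
 | |- lim0 (fun x => / @?f x) _ => eapply (lim0_inv f); [lim_t|]
 | |- lim0 (fun x => @?f x ^ ?n) _ => eapply (lim0_pow f _ n); lim_t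
 | |- lim0 (fun x => exp (@?f x)) _ => eapply (lim0_exp f); lim_t
 | |- lim0 (fun x => x) _ => apply lim0_id
 | |- lim0 (fun _ => ?c) _ => apply lim0_const
 | |- _ => eassumption
 end ].

Ltac cont_t := lazymatch goal with
 | |- continuous (fun x => @?f x + @?g x) _ => apply (cR_plus f g); [cont_t|cont_t]
 | |- continuous (fun x => @?f x - @?g x) _ => apply (cR_minus f g); [cont_t|cont_t]
 | |- continuous (fun x => @?f x * @?g x) _ => apply (cR_mult f g); [cont_t|cont_t]
 | |- continuous (fun x => @?f x / @?g x) _ => apply (cR_div f g); [cont_t|cont_t|]
 | |- continuous (fun x => - @?f x) _ => apply (cR_opp f); cont_t
 | |- continuous (fun x => / @?f x) _ => apply (cR_inv f); [cont_t|]
 | |- continuous (fun x => @?f x ^ ?n) _ => apply (cR_pow f n); cont_t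
 | |- continuous (fun x => exp (@?f x)) _ => apply (cR_exp f); cont_t
 | |- continuous (fun x => x) _ => apply cR_id
 | |- continuous (fun _ => ?c) _ => apply cR_const
 | |- _ => eassumption
 end.

Lemma der_val (f : R -> R) x l l' : is_derive f x l -> l = l' -> is_derive f x l'.
Proof. intros H ->; exact H. Qed.

Ltac nzr := repeat (first [solve [lra] | apply Rmult_integral_contrapositive_currified | apply pow_nonzero]); try lra.

Section Bg.
Variables (Rs : R) (rho0 p0 : R -> R) (rhoc0 pc0 : R).
Hypothesis HRs : 0 < Rs.
Hypothesis Hc : forall r, 0 < r < Rs -> continuous rho0 r.
Hypothesis Hlr : lim0 rho0 rhoc0.
Hypothesis Hlp : lim0 p0 pc0.
Hypothesis Hq : forall r, 0 < r < Rs -> 1 - 2 * mass rho0 r / r > 0.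
Hypothesis Hpd : forall r, 0 < r < Rs ->
     is_derive p0 r (- (rho0 r + p0 r) * gfun (mass rho0) p0 r).
Hypothesis Hd : forall r, 0 <= r < Rs -> 1 + r * gfun (mass rho0) p0 r > 0.

Local Notation m0 := (mass rho0).
Local Notation g := (gfun (mass rho0) p0).
Local Notation gd := (gdf (mass rho0) p0 rho0).
Local Notation hh := (fun s => gfun (mass rho0) p0 s * (1 - s * gfun (mass rho0) p0 s) / (1 + s * gfun (mass rho0) p0 s)).

Lemma m0_der r : 0 < r < Rs -> is_derive m0 r (4 * PI * r ^ 2 * rho0 r).
Proof. apply (mass_deriv Rs rho0 rhoc0); auto. Qed.

Lemma g_der r : 0 < r < Rs -> is_derive g r (gd r).
Proof.
  intros Hr. apply gfun_deriv. lra. specialize (Hq r Hr); lra. apply m0_der; auto. apply Hpd; auto.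
Qed.

Lemma m0_cont r : 0 < r < Rs -> continuous m0 r.
Proof. intros. eapply cR_der, m0_der; eauto. Qed.
Lemma p0_cont r : 0 < r < Rs -> continuous p0 r.
Proof. intros. eapply cR_der, Hpd; eauto. Qed.
Lemma g_cont r : 0 < r < Rs -> continuous g r.
Proof. intros. eapply cR_der, g_der; eauto. Qed.

Lemma m_small : lim0 (fun r => m0 r / r ^ 2) 0.
Proof. apply (mass_small rho0 Rs rhoc0); auto. Qed.

Lemma g_lim : lim0 g 0.
Proof.
  pose proof m_small as Hm.
  apply (lim0_ext (fun x => (m0 x / x ^ 2 + 4 * PI * p0 x * x) / (1 - 2 * (m0 x / x ^ 2) * x)) _ 0 Rs HRs).
  { intros x Hx. specialize (Hq x Hx). unfold gfun. field. split. lra. apply q_ne; lra. }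
  eapply lim0_eq. lim_t. lra. field; lra.
Qed.


Lemma hh_cont r : 0 < r < Rs -> continuous hh r.
Proof.
  intros Hr. pose proof (g_cont r Hr). apply cR_div. cont_t. cont_t. specialize (Hd r). simpl. lra.
Qed.

Lemma hh_lim : lim0 hh 0.
Proof.
  pose proof g_lim. eapply lim0_eq. lim_t. lra. field; lra.
Qed.

Lemma I0_der r : 0 < r < Rs -> is_derive (fun x => RInt hh 0 x) r (hh r).
Proof. apply (prim_deriv hh 0 Rs hh_cont hh_lim). Qed.

Lemma I0_lim : lim0 (fun x => RInt hh 0 x) 0.
Proof. apply (prim_lim0 hh 0 Rs hh_cont hh_lim HRs). Qed.

Lemma E_lim : lim0 (expfac g) 1.
Proof.
  unfold expfac. pose proof I0_lim. eapply lim0_eq. lim_t. rewrite Rmult_0_r; apply exp_0.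
Qed.

Lemma dmass_der drc r : 0 < r < Rs ->
  is_derive (dmass m0 p0 drc) r (acoef (g r) (gd r) r * dmass m0 p0 drc r).
Proof.
  intros Hr. unfold dmass, expfac.
  apply (dm_der g (fun x => RInt hh 0 x)). lra. specialize (Hd r); lra.
  apply g_der; auto. apply I0_der; auto.
Qed.


Lemma q_pos r : 0 < r < Rs -> 1 - 2 * m0 r / r <> 0.
Proof. intros Hr. specialize (Hq r Hr). lra. Qed.
Lemma d_pos r : 0 < r < Rs -> 1 + r * g r <> 0.
Proof. intros Hr. specialize (Hd r). lra. Qed.

Ltac nzt := match goal with
 | Hr : 0 < ?r < Rs |- _ =>
   pose proof (q_pos r Hr); pose proof (d_pos r Hr); pose proof (q_ne r (m0 r) (proj1 Hr) (q_pos r Hr));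
   pose proof PI_RGT_0; destruct Hr
 end.

Lemma r2gd_lim : lim0 (fun x => x ^ 2 * gd x) 0.
Proof.
  pose proof m_small as Hm. pose proof g_lim.
  apply (lim0_ext (fun x =>
    (4 * PI * x ^ 2 * rho0 x + 4 * PI * (- (rho0 x + p0 x) * g x * x ^ 3 + p0 x * 3 * x ^ 2)
     - g x * (2 * x * (1 - 2 * (m0 x / x ^ 2) * x) - 8 * PI * x ^ 3 * rho0 x + 2 * ((m0 x / x ^ 2) * x ^ 2)))
    / (1 - 2 * (m0 x / x ^ 2) * x)) _ 0 Rs HRs).
  { intros x Hx. nzt. unfold gdf. cbv zeta. field; repeat split; lra. }
  eapply lim0_eq. lim_t. lra. field; lra.
Qed.


Section Fw.
Variable drc : R.
Local Notation dm := (dmass m0 p0 drc).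
Local Notation mp := (mpert m0 p0 drc).
Local Notation rp := (rhopert m0 p0 drc).
Local Notation pp := (ppert m0 p0 drc).

Lemma mpert_der r : 0 < r < Rs -> is_derive mp r (4 * PI * r ^ 2 * rho0 r + acoef (g r) (gd r) r * dm r).
Proof.
  intros Hr. unfold mpert. apply (is_derive_plus m0 dm). apply m0_der; auto. apply dmass_der; auto.
Qed.

Lemma rhopert_eq r : 0 < r < Rs -> rp r = rho0 r + acoef (g r) (gd r) r * dm r / (4 * PI * r ^ 2).
Proof.
  intros Hr. unfold rhopert. rewrite (is_derive_unique _ _ _ (mpert_der r Hr)). nzt. field. lra.
Qed.

Lemma dm_cont r : 0 < r < Rs -> continuous dm r.
Proof. intros. eapply cR_der, dmass_der; eauto. Qed.

Lemma rhopert_cont r : 0 < r < Rs -> continuous rp r.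
Proof.
  intros Hr.
  apply continuous_ext_loc with (g := fun x => rho0 x + acoef (g x) (gd x) x * dm x / (4 * PI * x ^ 2)).
  { apply filter_imp with (P := fun y => 0 < y < Rs); [|apply loc_interval; lra].
    intros y Hy. symmetry; apply rhopert_eq; auto. }
  pose proof (Hc r Hr). pose proof (m0_cont r Hr). pose proof (p0_cont r Hr). pose proof (g_cont r Hr).
  pose proof (dm_cont r Hr).
  unfold acoef, gdf. cbv zeta. nzt.
  remember (dmass m0 p0 drc) as D. remember (gfun m0 p0) as G. remember (mass rho0) as M.
  clear HeqD HeqG HeqM.
  cont_t; nzr.
Qed.


Lemma dpres_expl r : 0 < r < Rs ->
  dpres m0 p0 drc r = (- drc / 3) / (1 + r * g r) ^ 2
        * ((1 + 8 * PI * p0 r * r ^ 2) / (1 - 2 * m0 r / r)) * expfac g r.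
Proof. intros Hr. nzt. unfold dpres, dmass. field; repeat split; lra. Qed.

Lemma rhopert_lim : lim0 rp (rhoc0 + drc).
Proof.
  pose proof g_lim. pose proof E_lim. pose proof r2gd_lim.
  apply (lim0_ext (fun x => rho0 x + drc * expfac g x / (1 + x * g x) ^ 2
     * (1 - 2 * (x ^ 2 * gd x + (x * g x) ^ 2) / (3 * (1 + x * g x)))) _ _ Rs HRs).
  { intros x Hx. rewrite rhopert_eq by auto. nzt. unfold acoef, dmass. field; repeat split; lra. }
  eapply lim0_eq. lim_t. all: try (simpl; lra). all: field.
Qed.

Lemma ppert_lim : lim0 pp (pc0 + - drc / 3).
Proof.
  pose proof g_lim. pose proof E_lim. pose proof m_small.
  apply (lim0_ext (fun x => p0 x + (- drc / 3) / (1 + x * g x) ^ 2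
        * ((1 + 8 * PI * p0 x * x ^ 2) / (1 - 2 * (m0 x / x ^ 2) * x)) * expfac g x) _ _ Rs HRs).
  { intros x Hx. unfold ppert. rewrite dpres_expl by auto. nzt. field; repeat split; lra. }
  eapply lim0_eq. lim_t. all: try (simpl; lra). all: field.
Qed.

Lemma mpert_lim : lim0 mp 0.
Proof.
  pose proof g_lim. pose proof E_lim. pose proof m_small.
  apply (lim0_ext (fun x => (m0 x / x ^ 2) * x ^ 2 + 4 * PI * x ^ 3 * drc / (3 * (1 + x * g x) ^ 2) * expfac g x) _ _ Rs HRs).
  { intros x Hx. unfold mpert, dmass. nzt. field; repeat split; lra. }
  eapply lim0_eq. lim_t. all: try (simpl; lra). all: field.
Qed.


Lemma mass_pert r : 0 < r < Rs -> mass rp r = mp r.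
Proof.
  intros Hr. apply Rminus_diag_uniq.
  apply (const_lim (fun x => mass rp x - mp x) Rs 0 HRs); auto.
  - intros x Hx.
    pose proof (is_derive_minus _ _ x _ _
      (mass_deriv Rs rp (rhoc0 + drc) HRs rhopert_cont rhopert_lim x Hx) (mpert_der x Hx)) as H.
    eapply der_val. exact H. unfold minus, plus, opp; simpl.
    rewrite (rhopert_eq x Hx). nzt. field. lra.
  - replace 0 with (0 - 0) by ring. apply lim0_minus.
    apply (mass_lim Rs rp (rhoc0 + drc) HRs rhopert_cont rhopert_lim). apply mpert_lim.
Qed.

Lemma dpres_loc x : 0 < x < Rs -> dpres m0 p0 drc x = - dm x * (1 + 2 * x * g x) / (4 * PI * x ^ 3).
Proof. intros Hx. unfold dpres. nzt. unfold gfun. field; repeat split; lra. Qed.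

Lemma ppert_der r : 0 < r < Rs -> is_derive pp r (- (rho0 r + p0 r) * g r +
   (- (acoef (g r) (gd r) r * dm r) * (1 + 2 * r * g r) / (4 * PI * r ^ 3) - dm r * 2 * (g r + r * gd r) / (4 * PI * r ^ 3)
    + 3 * dm r * (1 + 2 * r * g r) / (4 * PI * r ^ 4))).
Proof.
  intros Hr. unfold ppert. apply (is_derive_plus p0 (dpres m0 p0 drc)). apply Hpd; auto.
  apply is_derive_ext_loc with (f := fun x => - dm x * (1 + 2 * x * g x) / (4 * PI * x ^ 3)).
  { apply filter_imp with (P := fun y => 0 < y < Rs); [|apply loc_interval; lra].
    intros y Hy. symmetry; apply dpres_loc; auto. }
  apply dp_der. lra. apply dmass_der; auto. apply g_der; auto.
Qed.

Lemma tov_pert r : 0 < r < Rs ->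
  - (rho0 r + p0 r) * g r +
   (- (acoef (g r) (gd r) r * dm r) * (1 + 2 * r * g r) / (4 * PI * r ^ 3) - dm r * 2 * (g r + r * gd r) / (4 * PI * r ^ 3)
    + 3 * dm r * (1 + 2 * r * g r) / (4 * PI * r ^ 4))
  = - (rp r + pp r) * g r.
Proof.
  intros Hr. rewrite rhopert_eq by auto. unfold ppert. rewrite dpres_loc by auto. nzt.
  pose proof (key_id r (g r) (gd r) (dm r) (acoef (g r) (gd r) r * dm r) ltac:(lra) ltac:(lra)) as K.
  replace (acoef (g r) (gd r) r * dm r - acoef (g r) (gd r) r * dm r) with 0 in K by ring.
  rewrite Rmult_0_r in K. 
  set (A := acoef (g r) (gd r) r) in *. set (D := dm r) in *. set (G := g r) in *.
  set (DG := gd r) in *. 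
  apply Rminus_diag_uniq. rewrite <- K. field. lra.
Qed.

Lemma gfun_pert r : 0 < r < Rs -> 1 - 2 * mp r / r > 0 -> gfun mp pp r = g r.
Proof.
  intros Hr Hm. unfold gfun at 1. unfold ppert. rewrite dpres_loc by auto. unfold mpert in *.
  nzt. pose proof (q_ne r (m0 r + dm r) ltac:(lra) ltac:(lra)). unfold gfun. field. repeat split; lra.
Qed.

End Fw.
Lemma fw_main drc Rs' : 0 < Rs' <= Rs ->
  (forall r, 0 < r < Rs' -> 1 - 2 * mpert m0 p0 drc r / r > 0) ->
  TOV_regular Rs' (rhopert m0 p0 drc) (ppert m0 p0 drc) (rhoc0 + drc) (pc0 + (- drc / 3)) /\
  (forall r, 0 < r < Rs' -> mass (rhopert m0 p0 drc) r = mpert m0 p0 drc r) /\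
  (forall r, 0 < r < Rs' -> gfun (mpert m0 p0 drc) (ppert m0 p0 drc) r = g r).
Proof.
  intros HR Hm.
  assert (HMP : forall r, 0 < r < Rs' -> mass (rhopert m0 p0 drc) r = mpert m0 p0 drc r).
  { intros r Hr. apply mass_pert. lra. }
  assert (HGP : forall r, 0 < r < Rs' -> gfun (mpert m0 p0 drc) (ppert m0 p0 drc) r = g r).
  { intros r Hr. apply gfun_pert. lra. apply Hm; auto. }
  split; [|split; auto].
  split; [|split; [|split; [|split]]].
  - intros r Hr. apply rhopert_cont. lra.
  - apply rhopert_lim.
  - apply ppert_lim.
  - intros r Hr. rewrite HMP; auto.
  - intros r Hr.
    assert (E : gfun (mass (rhopert m0 p0 drc)) (ppert m0 p0 drc) r = gfun (mpert m0 p0 drc) (ppert m0 p0 drc) r).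
    { unfold gfun. rewrite HMP; auto. }
    rewrite E, HGP by auto. rewrite <- tov_pert by lra. apply ppert_der. lra.
Qed.

Lemma psi_pos r : 0 < r < Rs -> dmass m0 p0 (3 / (4 * PI)) r > 0.
Proof.
  intros Hr. nzt. unfold dmass, expfac.
  replace (4 * PI * r ^ 3 * (3 / (4 * PI)) / (3 * (1 + r * g r) ^ 2)) with (r ^ 3 / (1 + r * g r) ^ 2)
    by (field; lra).
  apply Rmult_lt_0_compat; [|apply exp_pos].
  apply Rdiv_lt_0_compat. apply pow_lt; lra. apply pow_lt. specialize (Hd r). lra.
Qed.

Lemma conv_main Rs' rho p rhoc pc : 0 < Rs' <= Rs -> TOV_regular Rs' rho p rhoc pc ->
  (forall r, 0 < r < Rs' -> gfun (mass rho) p r = g r) ->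
  exists drc, forall r, 0 < r < Rs' -> rho r = rhopert m0 p0 drc r /\ p r = ppert m0 p0 drc r.
Proof.
  intros HR [Hc' [Hlr' [Hlp' [Hq' Hpd']]]] Hg.
  assert (HRs' : 0 < Rs') by lra.
  set (m := mass rho).
  assert (mder : forall r, 0 < r < Rs' -> is_derive m r (4 * PI * r ^ 2 * rho r)).
  { apply (mass_deriv Rs' rho rhoc); auto. }
  set (del := fun x => m x - m0 x).
  assert (dder : forall r, 0 < r < Rs' -> is_derive del r (4 * PI * r ^ 2 * (rho r - rho0 r))).
  { intros r Hr. eapply der_val. apply (is_derive_minus m m0). apply mder; auto. apply m0_der; lra.
    unfold minus, plus, opp; simpl; ring. }
  set (psi := dmass m0 p0 (3 / (4 * PI))).
  assert (p_eq : forall r, 0 < r < Rs' -> p r = p0 r + (- del r * (1 + 2 * r * g r) / (4 * PI * r ^ 3))).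
  { intros r Hr. assert (Hr0 : 0 < r < Rs) by lra. specialize (Hg r Hr). specialize (Hq' r Hr). nzt.
    fold m in Hq', Hg. pose proof (q_ne r (m r) ltac:(lra) ltac:(lra)).
    unfold del. set (G := g r) in *. unfold gfun in Hg.
    assert (E1 : m r + 4 * PI * p r * r ^ 3 = G * (r ^ 2 * (1 - 2 * m r / r))).
    { fold m in Hg. rewrite <- Hg. field. split; lra. }
    assert (E2 : m0 r + 4 * PI * p0 r * r ^ 3 = G * (r ^ 2 * (1 - 2 * m0 r / r))).
    { unfold G, gfun. field. split; lra. }
    replace (p r) with ((G * (r ^ 2 * (1 - 2 * m r / r)) - m r) / (4 * PI * r ^ 3)) by (rewrite <- E1; field; lra).
    replace (p0 r) with ((G * (r ^ 2 * (1 - 2 * m0 r / r)) - m0 r) / (4 * PI * r ^ 3)) by (rewrite <- E2; field; lra).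
    field. lra. }
  assert (ode : forall r, 0 < r < Rs' -> 4 * PI * r ^ 2 * (rho r - rho0 r) = acoef (g r) (gd r) r * del r).
  { intros r Hr. assert (Hr0 : 0 < r < Rs) by lra.
    assert (Dp1 : is_derive p r (- (rho0 r + p0 r) * g r +
       (- (4 * PI * r ^ 2 * (rho r - rho0 r)) * (1 + 2 * r * g r) / (4 * PI * r ^ 3)
        - del r * 2 * (g r + r * gd r) / (4 * PI * r ^ 3)
        + 3 * del r * (1 + 2 * r * g r) / (4 * PI * r ^ 4)))).
    { apply is_derive_ext_loc with (f := fun x => p0 x + (- del x * (1 + 2 * x * g x) / (4 * PI * x ^ 3))).
      { apply filter_imp with (P := fun y => 0 < y < Rs'); [|apply loc_interval; lra].
        intros y Hy. symmetry; apply p_eq; auto. }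
      apply (is_derive_plus p0). apply Hpd; auto. apply dp_der. lra. apply dder; auto. apply g_der; auto. }
    pose proof (Hpd' r Hr) as Dp2. rewrite (Hg r Hr) in Dp2.
    pose proof (is_derive_unique _ _ _ Dp1) as U1. rewrite (is_derive_unique _ _ _ Dp2) in U1.
    pose proof (p_eq r Hr) as Pe.
    nzt.
    pose proof (key_id r (g r) (gd r) (del r) (4 * PI * r ^ 2 * (rho r - rho0 r)) ltac:(lra) ltac:(lra)) as K.
    set (A := acoef (g r) (gd r) r) in *. set (D := del r) in *. set (G := g r) in *.
    set (DG := gd r) in *. set (X := rho r - rho0 r) in *.
    assert (K0 : - (1 + r * G) / (4 * PI * r ^ 3) * (4 * PI * r ^ 2 * X - A * D) = 0).
    { rewrite <- K. rewrite Pe in U1. unfold X in *. rewrite <- (Rminus_diag_eq _ _ (eq_sym U1)). field. lra. }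
    apply Rmult_integral in K0. destruct K0 as [K0|K0].
    - exfalso. revert K0. unfold Rdiv. apply Rmult_integral_contrapositive_currified. lra.
      apply Rinv_neq_0_compat. nzr.
    - lra. }
  set (F := fun x => del x / psi x).
  assert (Fd : forall x, 0 < x < Rs' -> is_derive F x 0).
  { intros x Hx. assert (Hx0 : 0 < x < Rs) by lra. pose proof (psi_pos x Hx0) as Hps. fold psi in Hps.
    eapply der_val. apply is_derive_div. apply dder; auto. apply dmass_der; auto. fold psi. lra.
    fold psi. rewrite ode by auto.
    assert (Z : forall a b c : R, c <> 0 -> (a * b * c - b * (a * c)) / c ^ 2 = 0) by (intros; field; auto).
    apply Z. lra. }
  set (C := F (Rs' / 2)).
  exists (C * (3 / (4 * PI))).
  assert (Hdm : forall x, 0 < x < Rs' -> dmass m0 p0 (C * (3 / (4 * PI))) x = del x).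
  { intros x Hx. assert (Hx0 : 0 < x < Rs) by lra. pose proof (psi_pos x Hx0).
    assert (E : F x = C) by (apply (const_on F 0 Rs' Fd); lra).
    unfold F, psi in E. rewrite <- E. nzt. pose proof (exp_pos (2 * RInt hh 0 x)).
    unfold dmass, expfac in *. field. repeat split; try lra. }
  intros r Hr. assert (Hr0 : 0 < r < Rs) by lra.
  split.
  - unfold rhopert.
    assert (Dm : is_derive (mpert m0 p0 (C * (3 / (4 * PI)))) r (4 * PI * r ^ 2 * rho r)).
    { apply is_derive_ext_loc with (f := m).
      { apply filter_imp with (P := fun y => 0 < y < Rs'); [|apply loc_interval; lra].
        intros y Hy. unfold mpert. rewrite Hdm by auto. unfold del.
        assert (Z : forall a b : R, a = b + (a - b)) by (intros; ring). apply Z. }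
      apply mder; auto. }
    rewrite (is_derive_unique _ _ _ Dm). nzt.
    assert (Z : forall a c : R, c <> 0 -> a = c * a / c) by (intros; field; auto). apply Z. nzr.
  - unfold ppert. rewrite dpres_loc by auto. rewrite Hdm by auto. apply p_eq; auto.
Qed.

End Bg.

Theorem theoremP2 (Rs : R) (rho0 p0 : R -> R) (rhoc0 pc0 : R) :
  0 < Rs ->
  TOV_regular Rs rho0 p0 rhoc0 pc0 ->
  (forall r, 0 <= r < Rs -> 1 + r * gfun (mass rho0) p0 r > 0) ->
  (* forward direction *)
  (forall drc : R,
     (* explicit form of delta p, with delta p_c = - delta rho_c / 3 *)
     (forall r, 0 < r < Rs ->
        dpres (mass rho0) p0 drc r =
        (- drc / 3) / (1 + r * gfun (mass rho0) p0 r) ^ 2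
        * ((1 + 8 * PI * p0 r * r ^ 2) / (1 - 2 * mass rho0 r / r))
        * expfac (gfun (mass rho0) p0) r) /\
     (forall Rs' : R, 0 < Rs' <= Rs ->
        (forall r, 0 < r < Rs' ->
           1 - 2 * mpert (mass rho0) p0 drc r / r > 0) ->
        TOV_regular Rs' (rhopert (mass rho0) p0 drc) (ppert (mass rho0) p0 drc)
          (rhoc0 + drc) (pc0 + (- drc / 3)) /\
        (forall r, 0 < r < Rs' ->
           mass (rhopert (mass rho0) p0 drc) r = mpert (mass rho0) p0 drc r) /\
        (forall r, 0 < r < Rs' ->
           gfun (mpert (mass rho0) p0 drc) (ppert (mass rho0) p0 drc) r
           = gfun (mass rho0) p0 r))) /\
  (* converse *)
  (forall (Rs' : R) (rho p : R -> R) (rhoc pc : R),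
     0 < Rs' <= Rs ->
     TOV_regular Rs' rho p rhoc pc ->
     (forall r, 0 < r < Rs' -> gfun (mass rho) p r = gfun (mass rho0) p0 r) ->
     exists drc : R,
       forall r, 0 < r < Rs' ->
         rho r = rhopert (mass rho0) p0 drc r /\
         p r = ppert (mass rho0) p0 drc r).
Proof.
  intros HRs HT Hd. destruct HT as [Hc [Hlr [Hlp [Hq Hpd]]]].
  split.
  - intros drc. split.
    + intros r Hr. eapply dpres_expl; eauto.
    + intros Rs' HR Hm. eapply fw_main; eauto.
  - intros Rs' rho p rhoc pc HR HT Hg. eapply conv_main; eauto.
Qed.
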